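(* If $r\ge1$ and $n_1,\ldots,n_r\ge0$ are integers with $n_1>0$ (i.e. $-n_1<0$), then \[ \zeta(-n_1,\ldots,-n_r|1)=\zeta(-n_1,\ldots,-n_r|0). \]
   Context: Normalized multiple Bernoulli polynomials: for integers $k\ge0$, $\zeta(-k|z)=-\frac{B_{k+1}(z)}{k+1}$ ($B_n(z)$ the Bernoulli polynomials, $B_n=B_n(0)$), and for $r\ge2$, $k_j\ge0$, $\zeta(-k_1,\ldots,-k_r|z)=-\frac{1}{k_r+1}\zeta(-k_1,\ldots,-k_{r-2},-k_{r-1}-k_r-1|z)-\frac12\zeta(-k_1,\ldots,-k_{r-2},-k_{r-1}-k_r|z)+\sum_{q=1}^{k_r}(-k_r)_q\frac{B_{q+1}}{(q+1)!}\zeta(-k_1,\ldots,-k_{r-2},-k_{r-1}-k_r+q|z)$, with $(a)_q=a(a+1)\cdots(a+q-1)$ (for $r=2$ the prefix is empty). *)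

(* Defs.v *)
From mathcomp Require Import all_boot all_order all_algebra.
Set Implicit Arguments. Unset Strict Implicit. Unset Printing Implicit Defensive.
Import Order.TTheory GRing.Theory Num.Theory.
Local Open Scope ring_scope.

(* Bernoulli numbers B_0 .. B_n (convention B_1 = -1/2, i.e. B_n = B_n(0)),
   via B_0 = 1 and sum_{k=0}^{n} C(n+1,k) B_k = 0 for n >= 1. *)
Fixpoint bern_seq (n : nat) : seq rat :=
  match n with
  | 0 => [:: 1]
  | n'.+1 =>
      let s := bern_seq n' in
      rcons s (- (n'.+2%:R)^-1 * \sum_(k < n'.+1) ('C(n'.+2, k))%:R * s`_k)
  end.

Definition bern (n : nat) : rat := (bern_seq n)`_n.

Definition bernpoly (n : nat) (z : rat) : rat :=
  \sum_(k < n.+1) ('C(n, k))%:R * bern k * z ^+ (n - k).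

Definition pochhammer (a : rat) (q : nat) : rat := \prod_(i < q) (a + i%:R).

(* zeta_aux pre m z = zeta(-k_1,...,-k_{r-1}, -m | z) where pre = [k_{r-1}; ...; k_1]
   (the prefix listed in reverse order).  Recursion in the length. *)
Fixpoint zeta_aux (pre : seq nat) (m : nat) (z : rat) : rat :=
  match pre with
  | [::] => - bernpoly m.+1 z / m.+1%:R
  | a :: pre' =>
      - (m.+1%:R)^-1 * zeta_aux pre' (a + m).+1 z
      - 2%:R^-1 * zeta_aux pre' (a + m) z
      + \sum_(1 <= q < m.+1)
          pochhammer (- m%:R) q * (bern q.+1 / (q.+1)`!%:R) * zeta_aux pre' (a + m - q) z
  end.

(* zeta(-k_1,...,-k_r | z) for ks = [k_1; ...; k_r] (r >= 1); value 0 for r = 0 (unused). *)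
Definition mzeta (ks : seq nat) (z : rat) : rat :=
  match rev ks with
  | [::] => 0
  | m :: pre => zeta_aux pre m z
  end.

(* Main.v *)
Require Import Defs.
From mathcomp Require Import all_boot all_order all_algebra.
Import Order.TTheory GRing.Theory Num.Theory.
Local Open Scope ring_scope.

Lemma size_bern_seq n : size (bern_seq n) = n.+1.
Proof. by elim: n => [|n IH] //=; rewrite size_rcons IH. Qed.

Lemma nth_bern_seq n k : (k <= n)%N -> (bern_seq n)`_k = bern k.
Proof.
elim: n k => [|n IH] k.
  by rewrite leqn0 => /eqP ->.
rewrite leq_eqVlt => /orP [/eqP -> //|Hk].
by rewrite /= nth_rcons size_bern_seq Hk IH.
Qed.

Lemma bern_rec n : \sum_(k < n.+2) ('C(n.+2,k))%:R * bern k = 0.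
Proof.
rewrite big_ord_recr /=.
have -> : bern n.+1 = - (n.+2%:R)^-1 * \sum_(k < n.+1) ('C(n.+2, k))%:R * (bern_seq n)`_k.
  by rewrite /bern /= nth_rcons size_bern_seq ltnn eqxx.
rewrite [X in _ + _ * (_ * X)](eq_bigr (fun k : 'I_n.+1 => ('C(n.+2, k))%:R * bern k)); last first.
  move=> i _; rewrite nth_bern_seq //; exact: (ltn_ord i).
rewrite binSn mulrA mulrN mulfV ?pnatr_eq0 // mulN1r.
by rewrite addrN.
Qed.

Lemma bernpoly10 m : (0 < m)%N -> bernpoly m.+1 1 = bernpoly m.+1 0.
Proof.
case: m => [//|m] _.
rewrite /bernpoly [LHS]big_ord_recr [RHS]big_ord_recr /= subnn !expr0.
congr (_ + _).
transitivity (\sum_(k < m.+2) ('C(m.+2,k))%:R * bern k).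
  by apply: eq_bigr => i _; rewrite expr1n mulr1.
rewrite bern_rec; symmetry; apply: big1 => i _.
by rewrite expr0n subn_eq0 leqNgt ltn_ord /= mulr0.
Qed.

Lemma zeta_aux10 pre m : (0 < last m pre)%N -> zeta_aux pre m 1 = zeta_aux pre m 0.
Proof.
elim: pre m => [|a pre IH] m /= H.
  by rewrite bernpoly10.
have K : forall m', (a <= m')%N -> zeta_aux pre m' 1 = zeta_aux pre m' 0.
  move=> m' Hm'; apply: IH; move: H; case: (pre) => [|b p] //= H.
  exact: leq_trans H Hm'.
rewrite !K ?leq_addr //; last by apply: leqW; rewrite leq_addr.
congr (_ + _); apply: eq_big_nat => q /andP [_ Hq].
rewrite K //; rewrite -addnBA ?leq_addr //; exact: ltnSE.
Qed.

Theorem mainTheorem10 (n1 : nat) (ns : seq nat) :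
  (0 < n1)%N -> mzeta (n1 :: ns) 1 = mzeta (n1 :: ns) 0.
Proof.
move=> H; rewrite /mzeta rev_cons.
case E: (rev ns) => [|m pre] /=; first by rewrite bernpoly10.
apply: zeta_aux10; by rewrite last_rcons.
Qed.
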